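(* Suppose $f$ is twice differentiable at every point of $\mathbb{R}^{n\times p}$, and let $X\in\mathcal{S}_{n,p}$ satisfy $\nabla h(X)=0$. Then for every $D_1\in\mathcal{T}_X$ and $D_2\in\mathcal{N}_X$, $$\langle D_2,\nabla^2h(X)[D_2]\rangle\ge(2\beta-M_2)\|D_2\|_F^2,\qquad \langle D_1,\nabla^2h(X)[D_2]\rangle=0 .$$
   Context: $f:\mathbb{R}^{n\times p}\to\mathbb{R}$ is differentiable with $f,\nabla f$ locally Lipschitz. $\langle A,B\rangle=\mathrm{tr}(A^\top B)$, $\Phi(M):=\frac12(M+M^\top)$. $\mathcal{S}_{n,p}=\{X:X^\top X=I_p\}$; for $X\in\mathcal{S}_{n,p}$, $\mathcal{T}_X:=\{D:\Phi(D^\top X)=0\}$ and $\mathcal{N}_X:=\{X\Lambda:\Lambda\in\mathbb{R}^{p\times p},\ \Lambda=\Lambda^\top\}$. $\mathcal{A}(X):=\frac32I_p-\frac12X^\top X$, $g(X):=f(X\mathcal{A}(X))$, $h(X):=g(X)+\frac\beta4\|X^\top X-I_p\|_F^2$ with $\beta>0$. $\Omega:=\{X:\|X\|_2\le1+\frac1{12}\}$ and $M_2:=\sup_{X\ne Y\in\Omega}\frac{\|\nabla g(X)-\nabla g(Y)\|_F}{\|X-Y\|_F}$. *)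

(* Defs.v *)
From HB Require Import structures.
From mathcomp Require Import all_boot all_order all_algebra.
From mathcomp Require Import all_classical all_reals all_analysis.
Set Implicit Arguments. Unset Strict Implicit. Unset Printing Implicit Defensive.
Import Order.TTheory GRing.Theory Num.Theory.
Import numFieldNormedType.Exports.
Local Open Scope classical_set_scope.
Local Open Scope ring_scope.

Section Defs.
Variables (R : realType) (n p : nat).
Notation Mnp := 'M[R]_(n, p).

Definition frob_inner (m k : nat) (A B : 'M[R]_(m, k)) : R := \tr (A^T *m B).
Definition frob_norm (m k : nat) (A : 'M[R]_(m, k)) : R := Num.sqrt (frob_inner A A).

Definition Phi (M : 'M[R]_p) : 'M[R]_p := 2^-1 *: (M + M^T).

Definition stiefel (X : Mnp) : Prop := X^T *m X = 1%:M.
Definition tangent_sp (X D : Mnp) : Prop := Phi (D^T *m X) = 0.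
Definition normal_sp (X D : Mnp) : Prop :=
  exists L : 'M[R]_p, L^T = L /\ D = X *m L.

Definition Acal (X : Mnp) : 'M[R]_p := (3 / 2) *: 1%:M - (1 / 2) *: (X^T *m X).
Definition gfun (f : Mnp -> R) (X : Mnp) : R := f (X *m Acal X).
Definition hfun (f : Mnp -> R) (beta : R) (X : Mnp) : R :=
  gfun f X + beta / 4 * frob_norm (X^T *m X - 1%:M) ^+ 2.

Definition grad (F : Mnp -> R) (X : Mnp) : Mnp :=
  \matrix_(i, j) ('D_(delta_mx i j) F X).
Definition hess (F : Mnp -> R) (X D : Mnp) : Mnp := 'd (grad F) X D.

Definition spec_norm (X : Mnp) : R :=
  sup [set frob_norm (X *m v) | v in [set v : 'cV[R]_p | frob_norm v = 1]].
Definition Omega : set Mnp := [set X | spec_norm X <= 1 + 1 / 12].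

Definition M2 (f : Mnp -> R) : R :=
  sup [set r | exists X Y : Mnp, [/\ Omega X, Omega Y, X <> Y &
        r = frob_norm (grad (gfun f) X - grad (gfun f) Y) / frob_norm (X - Y)]].

Definition loc_lip_scal (F : Mnp -> R) : Prop :=
  forall X : Mnp, exists2 r : R, 0 < r & exists L : R, forall Y Z : Mnp,
    frob_norm (Y - X) < r -> frob_norm (Z - X) < r ->
    `|F Y - F Z| <= L * frob_norm (Y - Z).
Definition loc_lip_mx (F : Mnp -> Mnp) : Prop :=
  forall X : Mnp, exists2 r : R, 0 < r & exists L : R, forall Y Z : Mnp,
    frob_norm (Y - X) < r -> frob_norm (Z - X) < r ->
    frob_norm (F Y - F Z) <= L * frob_norm (Y - Z).
End Defs.

(* Main.v *)
Require Import Defs.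
From HB Require Import structures.
From mathcomp Require Import all_boot all_order all_algebra.
From mathcomp Require Import all_classical all_reals all_analysis.
Import Order.TTheory GRing.Theory Num.Theory.
Import numFieldNormedType.Exports.
Local Open Scope ring_scope.


Set Implicit Arguments. Unset Strict Implicit. Unset Printing Implicit Defensive.
From mathcomp Require Import ring lra.

Section Frob.
Variable R : realType.
Lemma mul_self_ge0 (x : R) : 0 <= x * x.
Proof. by rewrite -expr2 sqr_ge0. Qed.

Lemma frob_innerE m k (A B : 'M[R]_(m, k)) :
  frob_inner A B = \sum_i \sum_j A i j * B i j.
Proof.
rewrite /frob_inner /mxtrace exchange_big /=.
apply: eq_bigr => j _; rewrite !mxE; apply: eq_bigr => i _; by rewrite mxE.
Qed.

Lemma frob_innerC m k (A B : 'M[R]_(m, k)) : frob_inner A B = frob_inner B A.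
Proof. rewrite !frob_innerE; apply: eq_bigr => i _; apply: eq_bigr => j _; exact: mulrC. Qed.

Lemma frob_innerDr m k (A B C : 'M[R]_(m, k)) :
  frob_inner A (B + C) = frob_inner A B + frob_inner A C.
Proof. by rewrite /frob_inner mulmxDr mxtraceD. Qed.

Lemma frob_innerDl m k (A B C : 'M[R]_(m, k)) :
  frob_inner (B + C) A = frob_inner B A + frob_inner C A.
Proof. by rewrite frob_innerC frob_innerDr !(frob_innerC A). Qed.

Lemma frob_innerZr m k (A B : 'M[R]_(m, k)) c :
  frob_inner A (c *: B) = c * frob_inner A B.
Proof. by rewrite /frob_inner -scalemxAr mxtraceZ. Qed.

Lemma frob_innerZl m k (A B : 'M[R]_(m, k)) c :
  frob_inner (c *: A) B = c * frob_inner A B.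
Proof. by rewrite frob_innerC frob_innerZr frob_innerC. Qed.

Lemma frob_innerNr m k (A B : 'M[R]_(m, k)) :
  frob_inner A (- B) = - frob_inner A B.
Proof. by rewrite -scaleN1r frob_innerZr mulN1r. Qed.

Lemma frob_innerNl m k (A B : 'M[R]_(m, k)) :
  frob_inner (- A) B = - frob_inner A B.
Proof. by rewrite frob_innerC frob_innerNr frob_innerC. Qed.

Lemma frob_innerBr m k (A B C : 'M[R]_(m, k)) :
  frob_inner A (B - C) = frob_inner A B - frob_inner A C.
Proof. by rewrite frob_innerDr frob_innerNr. Qed.

Lemma frob_innerBl m k (A B C : 'M[R]_(m, k)) :
  frob_inner (B - C) A = frob_inner B A - frob_inner C A.
Proof. by rewrite frob_innerDl frob_innerNl. Qed.

Lemma frob_inner0r m k (A : 'M[R]_(m, k)) : frob_inner A 0 = 0.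
Proof. by rewrite /frob_inner mulmx0 linear0. Qed.

Lemma frob_inner0l m k (A : 'M[R]_(m, k)) : frob_inner 0 A = 0.
Proof. by rewrite frob_innerC frob_inner0r. Qed.

Lemma frob_inner_ge0 m k (A : 'M[R]_(m, k)) : 0 <= frob_inner A A.
Proof. rewrite frob_innerE; apply: sumr_ge0 => i _; apply: sumr_ge0 => j _; exact: mul_self_ge0. Qed.

Lemma frob_inner_eq0 m k (A : 'M[R]_(m, k)) : frob_inner A A = 0 -> A = 0.
Proof.
rewrite frob_innerE => H; apply/matrixP => i j; rewrite mxE.
have Hi := psumr_eq0P (fun i _ => sumr_ge0 _ (fun j _ => mul_self_ge0 (A i j))) H (i:=i) isT.
have := psumr_eq0P (fun j _ => mul_self_ge0 (A i j)) Hi (i:=j) isT.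
by move/eqP; rewrite mulf_eq0 orbb => /eqP.
Qed.

Lemma frob_norm_ge0 m k (A : 'M[R]_(m, k)) : 0 <= frob_norm A.
Proof. exact: sqrtr_ge0. Qed.

Lemma frob_norm_sq m k (A : 'M[R]_(m, k)) : frob_norm A ^+ 2 = frob_inner A A.
Proof. by rewrite /frob_norm sqr_sqrtr // frob_inner_ge0. Qed.

Lemma frob_CS2 m k (A B : 'M[R]_(m, k)) :
  frob_inner A B ^+ 2 <= frob_inner A A * frob_inner B B.
Proof.
have [a0|an0] := eqVneq (frob_inner A A) 0.
  have A0 : A = 0 by apply: frob_inner_eq0.
  by rewrite A0 !frob_inner0l expr0n /= mul0r.
have ag : 0 < frob_inner A A by rewrite lt_def an0 frob_inner_ge0.
have H := frob_inner_ge0 (frob_inner A A *: B - frob_inner A B *: A).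
rewrite !frob_innerBl !frob_innerBr !frob_innerZl !frob_innerZr in H.
rewrite (frob_innerC B A) in H.
have H2 : 0 <= frob_inner A A * (frob_inner A A * frob_inner B B - frob_inner A B ^+ 2).
  by move: H; congr (_ <= _); ring.
by rewrite (pmulr_rge0 _ ag) subr_ge0 in H2.
Qed.

Lemma le_of_sq (x y : R) : 0 <= y -> x ^+ 2 <= y ^+ 2 -> x <= y.
Proof.
move=> y0 H; apply: (le_trans (ler_norm x)).
by rewrite -sqrtr_sqr -(ger0_norm y0) -sqrtr_sqr; apply: ler_wsqrtr.
Qed.

Lemma frob_inner_le m k (A B : 'M[R]_(m, k)) :
  `|frob_inner A B| <= frob_norm A * frob_norm B.
Proof.
apply: le_of_sq; first by rewrite mulr_ge0 // frob_norm_ge0.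
by rewrite real_normK ?num_real // exprMn !frob_norm_sq frob_CS2.
Qed.

Lemma frob_inner_lower m k (A B : 'M[R]_(m, k)) :
  - (frob_norm A * frob_norm B) <= frob_inner A B.
Proof. by rewrite lerNl; apply: le_trans (frob_inner_le A B); rewrite -normrN ler_norm. Qed.

Lemma frob_normD m k (A B : 'M[R]_(m, k)) :
  frob_norm (A + B) <= frob_norm A + frob_norm B.
Proof.
apply: le_of_sq; first by rewrite addr_ge0 // frob_norm_ge0.
rewrite frob_norm_sq frob_innerDl !frob_innerDr sqrrD !frob_norm_sq (frob_innerC B A).
have h := le_trans (ler_norm (frob_inner A B)) (frob_inner_le A B).
rewrite -!frob_norm_sq; move: h; set x := frob_inner A B; set y := frob_norm A.
set z := frob_norm B; move=> h; rewrite mulr2n; lra.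
Qed.

Lemma frob_normZ m k (A : 'M[R]_(m, k)) c : frob_norm (c *: A) = `|c| * frob_norm A.
Proof.
by rewrite /frob_norm frob_innerZl frob_innerZr mulrA -expr2 sqrtrM ?sqr_ge0 // sqrtr_sqr.
Qed.

Lemma frob_normN m k (A : 'M[R]_(m, k)) : frob_norm (- A) = frob_norm A.
Proof. by rewrite /frob_norm frob_innerNl frob_innerNr opprK. Qed.

Lemma frob_normB m k (A B : 'M[R]_(m, k)) : frob_norm (A - B) = frob_norm (B - A).
Proof. by rewrite -frob_normN opprB. Qed.

Lemma frob_norm0 m k : frob_norm (0 : 'M[R]_(m, k)) = 0.
Proof. by rewrite /frob_norm frob_inner0l sqrtr0. Qed.

Lemma frob_normT m k (A : 'M[R]_(m, k)) : frob_norm A^T = frob_norm A.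
Proof. by rewrite /frob_norm /frob_inner trmxK mxtrace_mulC. Qed.

Lemma sum_CS (k : nat) (x y : 'I_k -> R) :
  (\sum_l x l * y l) ^+ 2 <= (\sum_l x l * x l) * (\sum_l y l * y l).
Proof.
have := frob_CS2 (\row_l x l : 'M[R]_(1, k)) (\row_l y l).
rewrite !frob_innerE !big_ord1.
by under eq_bigr do rewrite !mxE; under [X in _ <= X * _]eq_bigr do rewrite !mxE;
   under [X in _ <= _ * X]eq_bigr do rewrite !mxE.
Qed.

Lemma frob_normM m k l (A : 'M[R]_(m, k)) (B : 'M[R]_(k, l)) :
  frob_norm (A *m B) <= frob_norm A * frob_norm B.
Proof.
apply: le_of_sq; first by rewrite mulr_ge0 // frob_norm_ge0.
rewrite exprMn !frob_norm_sq !frob_innerE.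
rewrite big_distrl /=; apply: ler_sum => i _.
rewrite [X in _ * X]exchange_big big_distrr /=; apply: ler_sum => j _.
rewrite mxE -expr2; exact: (sum_CS (fun q => A i q) (fun q => B q j)).
Qed.
End Frob.

Section Diff.
Variable R : realType.
Variable V : normedModType R.

Lemma is_diff_coord m n (M : 'M[R]_(m, n)) i j :
  is_diff M (fun N : 'M[R]_(m, n) => N i j) (fun N => N i j).
Proof.
have lin : linear (fun N : 'M[R]_(m, n) => N i j : R^o).
  by move=> a u v; rewrite !mxE.
pose lM := GRing.isLinear.Build _ _ _ _ _ lin.
pose L : {linear 'M[R]_(m, n) -> R^o} := HB.pack (fun N : 'M[R]_(m, n) => N i j : R^o) lM.
apply: DiffDef; first exact: differentiable_coord.
have -> : (fun N : 'M[R]_(m, n) => N i j) = L by [].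
by rewrite diff_lin //; apply: coord_continuous.
Qed.

Lemma is_diff_entry m n (M dM : V -> 'M[R]_(m, n)) x i j :
  is_diff x M dM -> is_diff x (fun y => M y i j) (fun d => dM d i j).
Proof.
move=> HM; have := is_diff_comp HM (is_diff_coord (M x) i j).
by [].
Qed.

Lemma is_diff_addf (W : normedModType R) (f g df dg : V -> W) x :
  is_diff x f df -> is_diff x g dg ->
  is_diff x (fun y => f y + g y) (fun d => df d + dg d).
Proof. move=> Hf Hg; exact: is_diffD Hf Hg. Qed.

Lemma is_diff_oppf (W : normedModType R) (f df : V -> W) x :
  is_diff x f df -> is_diff x (fun y => - f y) (fun d => - df d).
Proof. move=> Hf; exact: is_diffN Hf. Qed.

Lemma is_diff_subf (W : normedModType R) (f g df dg : V -> W) x :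
  is_diff x f df -> is_diff x g dg ->
  is_diff x (fun y => f y - g y) (fun d => df d - dg d).
Proof. move=> Hf Hg; exact: is_diffB Hf Hg. Qed.

Lemma is_diff_scalef (W : normedModType R) (f df : V -> W) k x :
  is_diff x f df -> is_diff x (fun y => k *: f y) (fun d => k *: df d).
Proof. move=> Hf; exact: is_diffZ Hf. Qed.

Lemma is_diff_cstf (W : normedModType R) (a : W) x :
  is_diff x (fun _ : V => a) (fun _ => 0).
Proof. exact: is_diff_cst. Qed.

Lemma is_diff_idf x : is_diff x (fun y : V => y) (fun d => d).
Proof. exact: is_diff_id. Qed.

Lemma is_diff_compf (W U : normedModType R) (f df : V -> W) (g dg : W -> U) x :
  is_diff x f df -> is_diff (f x) g dg ->
  is_diff x (fun y => g (f y)) (fun d => dg (df d)).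
Proof. move=> Hf Hg; exact: is_diff_comp Hf Hg. Qed.

Lemma is_diff_mulf (f g df dg : V -> R) x :
  is_diff x f df -> is_diff x g dg ->
  is_diff x (fun y => f y * g y) (fun d => f x * dg d + df d * g x).
Proof.
move=> Hf Hg; have := is_diffM Hf Hg.
move=> H; apply: is_diff_eq H _; apply/funext => d /=.
by rewrite !fctE /= [df d * _]mulrC.
Qed.

Lemma is_diff_sumf (W : normedModType R) k (F dF : 'I_k -> V -> W) x :
  (forall l, is_diff x (F l) (dF l)) ->
  is_diff x (fun y => \sum_l F l y) (fun d => \sum_l dF l d).
Proof.
elim: k F dF => [|k IH] F dF H.
  have -> : (fun y => \sum_(l < 0) F l y) = (fun _ => 0) by apply/funext => y; rewrite big_ord0.
  have -> : (fun d => \sum_(l < 0) dF l d) = (fun _ => 0) by apply/funext => y; rewrite big_ord0.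
  exact: is_diff_cstf.
have -> : (fun y => \sum_(l < k.+1) F l y) =
   (fun y => \sum_(l < k) F (widen_ord (leqnSn k) l) y + F ord_max y).
  by apply/funext => y; rewrite big_ord_recr.
have -> : (fun y => \sum_(l < k.+1) dF l y) =
   (fun y => \sum_(l < k) dF (widen_ord (leqnSn k) l) y + dF ord_max y).
  by apply/funext => y; rewrite big_ord_recr.
exact: (is_diff_addf (IH _ _ (fun l => H _)) (H ord_max)).
Qed.

Lemma is_diff_Zlf (W : normedModType R) (k dk : V -> R) (C : W) x :
  is_diff x k dk -> is_diff x (fun y => k y *: C) (fun d => dk d *: C).
Proof.
move=> Hk; apply: DiffDef; first exact: differentiableZl.
by rewrite diffZl // diff_val.
Qed.

Lemma is_diff_entries m n (M dM : V -> 'M[R]_(m, n)) x :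
  (forall i j, is_diff x (fun y => M y i j) (fun d => dM d i j)) -> is_diff x M dM.
Proof.
move=> H.
have -> : M = (fun y => \sum_i \sum_j M y i j *: delta_mx i j).
  by apply/funext => y; rewrite {1}(matrix_sum_delta (M y)).
apply: is_diff_eq.
  apply: is_diff_sumf => i; apply: is_diff_sumf => j.
  exact: is_diff_Zlf (H i j).
by apply/funext => d; rewrite [RHS](matrix_sum_delta (dM d)).
Qed.

Lemma is_diff_mulmx m k l (A dA : V -> 'M[R]_(m, k)) (B dB : V -> 'M[R]_(k, l)) x :
  is_diff x A dA -> is_diff x B dB ->
  is_diff x (fun y => A y *m B y) (fun d => dA d *m B x + A x *m dB d).
Proof.
move=> HA HB; apply: is_diff_entries => i j.
have E1 : (fun y => (A y *m B y) i j) = (fun y => \sum_q A y i q * B y q j).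
  by apply/funext => y; rewrite mxE.
have E2 : (fun d => (dA d *m B x + A x *m dB d) i j) =
          (fun d => \sum_q (A x i q * dB d q j + dA d i q * B x q j)).
  apply/funext => d; rewrite !mxE -big_split /=; by apply: eq_bigr => q _; rewrite addrC.
rewrite E1 E2; apply: is_diff_sumf => q.
by apply: is_diff_mulf; apply: is_diff_entry.
Qed.

Lemma is_diff_trmx m k (A dA : V -> 'M[R]_(m, k)) x :
  is_diff x A dA -> is_diff x (fun y => (A y)^T) (fun d => (dA d)^T).
Proof.
move=> HA; apply: is_diff_entries => i j.
have -> : (fun y => (A y)^T i j) = (fun y => A y j i) by apply/funext => y; rewrite mxE.
have -> : (fun d => (dA d)^T i j) = (fun d => dA d j i) by apply/funext => y; rewrite mxE.
exact: is_diff_entry.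
Qed.

Lemma is_diff_trace m (A dA : V -> 'M[R]_m) x :
  is_diff x A dA -> is_diff x (fun y => \tr (A y)) (fun d => \tr (dA d)).
Proof.
move=> HA; rewrite /mxtrace; apply: is_diff_sumf => i; exact: is_diff_entry.
Qed.

End Diff.

Section Grad.
Variable R : realType.
Variables n p : nat.
Notation Mnp := 'M[R]_(n, p).

Lemma frob_inner_delta (G : Mnp) i j : frob_inner G (delta_mx i j) = G i j.
Proof.
rewrite frob_innerE (bigD1 i) //=.
have -> : \sum_(i' < n | i' != i) \sum_j0 G i' j0 * delta_mx i j i' j0 = 0.
  by apply: big1 => i' ne; apply: big1 => j' _; rewrite mxE (negbTE ne) /= mulr0.
rewrite addr0 (bigD1 j) //=.
have -> : \sum_(j' < p | j' != j) G i j' * delta_mx i j i j' = 0.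
  by apply: big1 => j' ne; rewrite mxE eqxx (negbTE ne) mulr0.
by rewrite mxE !eqxx mulr1 addr0.
Qed.

Lemma grad_entry (phi : Mnp -> R) Y i j : differentiable phi Y ->
  grad phi Y i j = 'd phi Y (delta_mx i j).
Proof. by move=> H; rewrite mxE deriveE. Qed.

Lemma diff_grad (phi : Mnp -> R) Y : differentiable phi Y ->
  forall D, 'd phi Y D = frob_inner (grad phi Y) D.
Proof.
move=> H D; rewrite {1}(matrix_sum_delta D) linear_sum frob_innerE.
apply: eq_bigr => i _; rewrite linear_sum; apply: eq_bigr => j _.
by rewrite linearZ grad_entry // mulrC.
Qed.

Lemma grad_unique (phi : Mnp -> R) Y (G : Mnp) : differentiable phi Y ->
  (forall D, 'd phi Y D = frob_inner G D) -> grad phi Y = G.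
Proof.
by move=> H HG; apply/matrixP => i j; rewrite grad_entry // HG frob_inner_delta.
Qed.
End Grad.

Section Moves.
Variable R : realType.
Lemma fi_mulr m k l (A : 'M[R]_(m, l)) (B : 'M[R]_(m, k)) (C : 'M[R]_(k, l)) :
  frob_inner A (B *m C) = frob_inner (B^T *m A) C.
Proof. by rewrite /frob_inner trmx_mul trmxK mulmxA. Qed.

Lemma fi_mulr2 m k l (A : 'M[R]_(m, l)) (B : 'M[R]_(m, k)) (C : 'M[R]_(k, l)) :
  frob_inner A (B *m C) = frob_inner (A *m C^T) B.
Proof. by rewrite /frob_inner trmx_mul trmxK mulmxA mxtrace_mulC mulmxA. Qed.

Lemma fi_tr m k (A : 'M[R]_(m, k)) (B : 'M[R]_(k, m)) :
  frob_inner A B^T = frob_inner A^T B.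
Proof. by rewrite /frob_inner trmxK -trmx_mul mxtrace_tr mxtrace_mulC. Qed.
End Moves.

Section HGrad.
Variable R : realType.
Variables n p : nat.
Notation Mnp := 'M[R]_(n, p).

Definition dPhi (Y D : Mnp) : Mnp :=
  D *m Acal Y + Y *m (0 - (1/2) *: (D^T *m Y + Y^T *m D)).

Definition Psi (Y W : Mnp) : Mnp :=
  (3/2) *: W - (1/2) *: (W *m (Y^T *m Y) + Y *m (W^T *m Y) + Y *m (Y^T *m W)).

Definition Pfun (beta : R) (Y : Mnp) : Mnp := beta *: (Y *m (Y^T *m Y - 1%:M)).

Lemma is_diff_mulcf (V : normedModType R) (g dg : V -> R) k x :
  is_diff x g dg -> is_diff x (fun y => k * g y) (fun d => k * dg d).
Proof.
move=> H; have := is_diff_mulf (is_diff_cstf k x) H.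
move=> H2; apply: is_diff_eq H2 _; apply/funext => d; by rewrite mul0r addr0.
Qed.

Lemma is_diff_Acal (Y : Mnp) :
  is_diff Y (@Acal R n p) (fun d => 0 - (1/2) *: (d^T *m Y + Y^T *m d)).
Proof.
exact: (is_diff_subf (is_diff_cstf _ _)
   (is_diff_scalef _ (is_diff_mulmx (is_diff_trmx (is_diff_idf Y)) (is_diff_idf Y)))).
Qed.

Lemma is_diff_Phim (Y : Mnp) :
  is_diff Y (fun Z : Mnp => Z *m Acal Z) (dPhi Y).
Proof. exact: (is_diff_mulmx (is_diff_idf Y) (is_diff_Acal Y)). Qed.

Lemma is_diff_C (Y : Mnp) :
  is_diff Y (fun Z : Mnp => Z^T *m Z - 1%:M) (fun d => (d^T *m Y + Y^T *m d) - 0).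
Proof.
exact: (is_diff_subf (is_diff_mulmx (is_diff_trmx (is_diff_idf Y)) (is_diff_idf Y))
         (is_diff_cstf _ _)).
Qed.

Lemma hfunE (f : Mnp -> R) beta :
  hfun f beta = fun Y => f (Y *m Acal Y) +
     beta / 4 * \tr ((Y^T *m Y - 1%:M)^T *m (Y^T *m Y - 1%:M)).
Proof. by apply/funext => Y; rewrite /hfun /gfun frob_norm_sq. Qed.

Lemma is_diff_hfun (f : Mnp -> R) beta (Y : Mnp) :
  differentiable f (Y *m Acal Y) ->
  is_diff Y (hfun f beta) (fun d => 'd f (Y *m Acal Y) (dPhi Y d) +
     beta / 4 * \tr (((d^T *m Y + Y^T *m d) - 0)^T *m (Y^T *m Y - 1%:M) +
                     (Y^T *m Y - 1%:M)^T *m ((d^T *m Y + Y^T *m d) - 0))).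
Proof.
move=> df; rewrite hfunE.
exact: (is_diff_addf (is_diff_compf (is_diff_Phim Y) (differentiableP df))
   (is_diff_mulcf _ (is_diff_trace (is_diff_mulmx (is_diff_trmx (is_diff_C Y)) (is_diff_C Y))))).
Qed.
End HGrad.

Section HGrad2.
Variable R : realType.
Variables n p : nat.
Notation Mnp := 'M[R]_(n, p).

Lemma dPhi_adj (Y W D : Mnp) :
  frob_inner W (dPhi Y D) = frob_inner (Psi Y W) D.
Proof.
have e1 : frob_inner W (D *m (Y^T *m Y)) = frob_inner (W *m (Y^T *m Y)) D.
  by rewrite fi_mulr2 trmx_mul trmxK.
have e2 : frob_inner W (Y *m (D^T *m Y)) = frob_inner (Y *m (W^T *m Y)) D.
  by rewrite fi_mulr fi_mulr2 fi_tr !trmx_mul !trmxK mulmxA.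
have e3 : frob_inner W (Y *m (Y^T *m D)) = frob_inner (Y *m (Y^T *m W)) D.
  by rewrite fi_mulr fi_mulr trmxK.
rewrite /dPhi /Acal /Psi mulmxBr -!scalemxAr mulmx1 sub0r mulmxN -scalemxAr mulmxDr.
rewrite ?frob_innerBr ?frob_innerDr ?frob_innerNr ?frob_innerZr ?frob_innerBr ?frob_innerDr ?frob_innerNr ?frob_innerZr.
rewrite ?frob_innerBl ?frob_innerDl ?frob_innerNl ?frob_innerZl ?frob_innerBl ?frob_innerDl ?frob_innerNl ?frob_innerZl.
rewrite e1 e2 e3 (frob_innerC W D); lra.
Qed.

Lemma pen_adj (beta : R) (Y D : Mnp) :
  beta / 4 * \tr (((D^T *m Y + Y^T *m D) - 0)^T *m (Y^T *m Y - 1%:M) +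
                     (Y^T *m Y - 1%:M)^T *m ((D^T *m Y + Y^T *m D) - 0))
  = frob_inner (Pfun beta Y) D.
Proof.
have CT : (Y^T *m Y - 1%:M)^T = Y^T *m Y - 1%:M.
  by rewrite linearB /= trmx_mul trmxK trmx1.
rewrite mxtraceD -[\tr (_ *m (Y^T *m Y - 1%:M))]/(frob_inner _ _).
rewrite -[\tr ((Y^T *m Y - 1%:M)^T *m _)]/(frob_inner _ _).
rewrite (frob_innerC _ (Y^T *m Y - 1%:M)) subr0 frob_innerDr.
set C := Y^T *m Y - 1%:M.
have e1 : frob_inner C (D^T *m Y) = frob_inner (Y *m C) D.
  by rewrite fi_mulr2 fi_tr trmx_mul trmxK CT.
have e2 : frob_inner C (Y^T *m D) = frob_inner (Y *m C) D.
  by rewrite fi_mulr trmxK.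
rewrite e1 e2 /Pfun frob_innerZl -/C; lra.
Qed.

Lemma grad_hfun (f : Mnp -> R) beta (Y : Mnp) :
  differentiable f (Y *m Acal Y) ->
  grad (hfun f beta) Y = Psi Y (grad f (Y *m Acal Y)) + Pfun beta Y.
Proof.
move=> df; have H := is_diff_hfun beta df.
apply: grad_unique; first exact: ex_diff.
move=> D; rewrite diff_val diff_grad // dPhi_adj pen_adj frob_innerDl.
done.
Qed.
End HGrad2.

Section Hess.
Variable R : realType.
Variables n p : nat.
Notation Mnp := 'M[R]_(n, p).
Variable f : Mnp -> R.

Definition Gf (Y : Mnp) : Mnp := Psi Y (grad f (Y *m Acal Y)).

Definition dGf (X D : Mnp) : Mnp :=
  let W := grad f (X *m Acal X) in
  let dW := 'd (grad f) (X *m Acal X) (dPhi X D) in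
  (3/2) *: dW - (1/2) *: ((dW *m (X^T *m X) + W *m (D^T *m X + X^T *m D)) +
     (D *m (W^T *m X) + X *m (dW^T *m X + W^T *m D)) +
     (D *m (X^T *m W) + X *m (D^T *m W + X^T *m dW))).

Definition dPf (beta : R) (X D : Mnp) : Mnp :=
  beta *: (D *m (X^T *m X - 1%:M) + X *m ((D^T *m X + X^T *m D) - 0)).

Lemma is_diff_Gf (X : Mnp) : differentiable (grad f) (X *m Acal X) ->
  is_diff X Gf (dGf X).
Proof.
move=> dF.
have HW : is_diff X (fun Y => grad f (Y *m Acal Y))
   (fun d => 'd (grad f) (X *m Acal X) (dPhi X d)).
  exact: (is_diff_compf (is_diff_Phim X) (differentiableP dF)).
have HY := is_diff_idf X.
exact: (is_diff_subf (is_diff_scalef _ HW) (is_diff_scalef _ (is_diff_addf (is_diff_addf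
  (is_diff_mulmx HW (is_diff_mulmx (is_diff_trmx HY) HY))
  (is_diff_mulmx HY (is_diff_mulmx (is_diff_trmx HW) HY)))
  (is_diff_mulmx HY (is_diff_mulmx (is_diff_trmx HY) HW))))).
Qed.

Lemma is_diff_Pf beta (X : Mnp) : is_diff X (Pfun beta) (dPf beta X).
Proof.
have HY := is_diff_idf X.
exact: (is_diff_scalef _ (is_diff_mulmx HY (is_diff_C X))).
Qed.

Lemma hess_eq beta (X D : Mnp) :
  (forall Y, differentiable f Y) -> (forall Y, differentiable (grad f) Y) ->
  hess (hfun f beta) X D = 'd Gf X D + dPf beta X D.
Proof.
move=> df dF; rewrite /hess.
have -> : grad (hfun f beta) = fun Y => Gf Y + Pfun beta Y.
  by apply/funext => Y; rewrite grad_hfun.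
have HG := is_diff_Gf (dF (X *m Acal X)).
have HGd : differentiable Gf X by case: HG.
have H1 : is_diff X Gf ('d Gf X) by exact: differentiableP HGd.
have H : is_diff X (fun Y => Gf Y + Pfun beta Y) (fun d => 'd Gf X d + dPf beta X d) by
  exact: (is_diff_addf H1 (is_diff_Pf beta X)).
exact: (congr1 (fun g => g D) (diff_val (is_diff_def := H))).
Qed.
Lemma dGf_val (X D : Mnp) : differentiable (grad f) (X *m Acal X) ->
  'd Gf X D = dGf X D.
Proof. move=> dF; exact: (congr1 (fun g => g D) (diff_val (is_diff_def := is_diff_Gf dF))). Qed.

Lemma Gf_diff (X : Mnp) : differentiable (grad f) (X *m Acal X) -> differentiable Gf X.
Proof. by move=> dF; case: (is_diff_Gf dF). Qed.
End Hess.

Section Alg.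
Variable R : realType.
Variables n p : nat.
Notation Mnp := 'M[R]_(n, p).
Notation Mp := 'M[R]_p.

Lemma tr_anti (A K : Mp) : A^T = - A -> K^T = K -> \tr (A *m K) = 0.
Proof.
move=> hA hK.
have e : \tr (A *m K) = - \tr (A *m K).
  by rewrite -{1}mxtrace_tr trmx_mul hA hK mulmxN linearN /= mxtrace_mulC.
move: e; set t := \tr (A *m K); lra.
Qed.

Lemma tr_anti2 (A S L : Mp) : A^T = - A -> S^T = S -> L^T = L ->
  \tr (A *m (S *m L)) = - \tr (A *m (L *m S)).
Proof.
move=> hA hS hL.
by rewrite -mxtrace_tr !trmx_mul hA hS hL mulmxN linearN /= mxtrace_mulC mulmxA.
Qed.

Lemma fi_X (X D1 : Mnp) (K : Mp) : frob_inner D1 (X *m K) = \tr ((D1^T *m X) *m K).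
Proof. by rewrite /frob_inner mulmxA. Qed.

Lemma XtXK (X : Mnp) (K : Mp) : X^T *m X = 1%:M -> X^T *m (X *m K) = K.
Proof. by move=> h; rewrite mulmxA h mul1mx. Qed.

Lemma XKtX (X : Mnp) (K : Mp) : X^T *m X = 1%:M -> (X *m K)^T *m X = K^T.
Proof. by move=> h; rewrite trmx_mul -mulmxA h mulmx1. Qed.

Lemma XKtXK (X : Mnp) (K1 K2 : Mp) : X^T *m X = 1%:M ->
  (X *m K1)^T *m (X *m K2) = K1^T *m K2.
Proof. by move=> h; rewrite trmx_mul -mulmxA XtXK. Qed.

Lemma key_orth (X D1 : Mnp) (L S : Mp) :
  X^T *m X = 1%:M -> (D1^T *m X)^T = - (D1^T *m X) -> L^T = L -> S^T = S ->
  frob_inner D1 ((X *m S) *m ((X *m L)^T *m X + X^T *m (X *m L))) +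
  frob_inner D1 ((X *m L) *m ((X *m S)^T *m X)) +
  frob_inner D1 (X *m ((X *m S)^T *m (X *m L))) +
  frob_inner D1 ((X *m L) *m (X^T *m (X *m S))) +
  frob_inner D1 (X *m ((X *m L)^T *m (X *m S))) = 0.
Proof.
move=> h hA hL hS.
rewrite XKtX // XtXK // XKtX // XtXK // !XKtXK // hL hS -!mulmxA !fi_X.
rewrite mulmxDr mulmxDr mxtraceD.
rewrite (tr_anti2 hA hS hL); lra.
Qed.
End Alg.

Section Alg2.
Variable R : realType.
Variables n p : nat.
Notation Mnp := 'M[R]_(n, p).
Notation Mp := 'M[R]_p.

Lemma half_double (K : Mp) : (1/2 : R) *: (K + K) = K.
Proof.
by rewrite scalerDr -scalerDl (_ : (1/2 : R) + 1/2 = 1) ?scale1r //; lra.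
Qed.

Lemma AcalX (X : Mnp) : X^T *m X = 1%:M -> Acal X = 1%:M.
Proof.
move=> h; rewrite /Acal h -scalerBl (_ : (3/2 : R) - 1/2 = 1) ?scale1r //; lra.
Qed.

Lemma XAX (X : Mnp) : X^T *m X = 1%:M -> X *m Acal X = X.
Proof. by move=> h; rewrite AcalX // mulmx1. Qed.

Lemma dPhi_normal (X : Mnp) (L : Mp) : X^T *m X = 1%:M -> L^T = L ->
  dPhi X (X *m L) = 0.
Proof.
move=> h hL; rewrite /dPhi AcalX // mulmx1 XKtX // XtXK // hL half_double.
by rewrite sub0r mulmxN subrr.
Qed.

Lemma dPf_normal beta (X : Mnp) (L : Mp) : X^T *m X = 1%:M -> L^T = L ->
  dPf beta X (X *m L) = (2 * beta) *: (X *m L).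
Proof.
move=> h hL; rewrite /dPf h subrr mulmx0 add0r XKtX // XtXK // hL subr0.
by rewrite mulmxDr scalerDr -scalerDl mulr2n mulrDl mul1r.
Qed.

Lemma tangent_anti (X D1 : Mnp) : tangent_sp X D1 ->
  (D1^T *m X)^T = - (D1^T *m X).
Proof.
rewrite /tangent_sp /Phi => /eqP; rewrite scaler_eq0 invr_eq0 pnatr_eq0 /=.
rewrite addrC addr_eq0 => /eqP; done.
Qed.

Lemma grad_cond (f : Mnp -> R) beta (X : Mnp) : X^T *m X = 1%:M ->
  differentiable f X -> grad (hfun f beta) X = 0 ->
  exists S : Mp, S^T = S /\ grad f X = X *m S.
Proof.
move=> h df; rewrite grad_hfun; last by rewrite XAX.
rewrite XAX // /Pfun h subrr mulmx0 scaler0 addr0 /Psi h mulmx1.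
set W := grad f X => H.
exists ((1/2 : R) *: (W^T *m X + X^T *m W)); split.
  by rewrite linearZ /= linearD /= !trmx_mul !trmxK addrC.
have e : W = (3/2 : R) *: W - (1/2 : R) *: W.
  by rewrite -scalerBl (_ : (3/2 : R) - 1/2 = 1) ?scale1r //; lra.
rewrite {1}e; move/subr0_eq: H => ->.
by rewrite -scalerBr addrAC (addrAC W) subrr add0r -scalemxAr mulmxDr.
Qed.

Lemma orth_main (f : Mnp -> R) beta (X D1 : Mnp) (L S : Mp) :
  X^T *m X = 1%:M -> tangent_sp X D1 -> L^T = L -> S^T = S -> grad f X = X *m S ->
  frob_inner D1 (dGf f X (X *m L) + dPf beta X (X *m L)) = 0.
Proof.
move=> h /tangent_anti hA hL hS hW.
rewrite dPf_normal // frob_innerDr frob_innerZr fi_X (tr_anti hA hL) mulr0 addr0.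
rewrite /dGf /= dPhi_normal // linear0 XAX // hW.
rewrite ?scaler0 ?mul0mx ?trmx0 ?mulmx0 ?add0r ?addr0 ?sub0r ?add0r ?addr0.
rewrite frob_innerNr frob_innerZr ?frob_innerDr.
have K := key_orth h hA hL hS; rewrite mul0mx add0r; lra.
Qed.

Lemma pen_main beta (X : Mnp) (L : Mp) : X^T *m X = 1%:M -> L^T = L ->
  frob_inner (X *m L) (dPf beta X (X *m L)) = 2 * beta * frob_norm (X *m L) ^+ 2.
Proof. by move=> h hL; rewrite dPf_normal // frob_innerZr frob_norm_sq. Qed.
End Alg2.

Local Open Scope classical_set_scope.

Section Lower.
Variable R : realType.
Variables n p : nat.
Notation Mnp := 'M[R]_(n, p).

Lemma grad_gfun (f : Mnp -> R) (Y : Mnp) :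
  differentiable f (Y *m Acal Y) -> grad (gfun f) Y = Gf f Y.
Proof.
move=> df.
have H : is_diff Y (gfun f) (fun d => 'd f (Y *m Acal Y) (dPhi Y d)).
  exact: (is_diff_compf (is_diff_Phim Y) (differentiableP df)).
apply: grad_unique; first by case: H.
move=> D; rewrite (congr1 (fun g => g D) (diff_val (is_diff_def := H))) /=.
by rewrite diff_grad // dPhi_adj.
Qed.

Lemma frob_norm_X (X : Mnp) (v : 'cV[R]_p) : X^T *m X = 1%:M ->
  frob_norm (X *m v) = frob_norm v.
Proof. by move=> h; rewrite /frob_norm fi_mulr mulmxA h mul1mx. Qed.

Lemma omega_near (X D : Mnp) (h : R) : X^T *m X = 1%:M ->
  `|h| * frob_norm D <= 1/12 -> Omega (h *: D + X).
Proof.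
move=> hX hh; rewrite /Omega /= /spec_norm.
set E := [set _ | _ in _].
have [->|En] := eqVneq E set0; first by rewrite sup0; lra.
apply: ge_sup; first exact/set0P.
move=> _ [v /= nv <-].
rewrite mulmxDl; apply: le_trans (frob_normD _ _) _.
rewrite (frob_norm_X v hX) nv addrC lerD2l -scalemxAl frob_normZ.
apply: le_trans hh; apply: ler_wpM2l => //.
by apply: le_trans (frob_normM D v) _; rewrite nv mulr1.
Qed.

Lemma quot_lb (h a M N : R) : h != 0 -> `|a| <= N * (M * (`|h| * N)) ->
  - (M * N ^+ 2) <= h^-1 * a.
Proof.
move=> h0 ha.
have hp : 0 < `|h| by rewrite normr_gt0.
have e : `|h^-1 * a| <= M * N ^+ 2.
  rewrite normrM normrV ?unitfE // mulrC ler_pdivrMr //.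
  by apply: le_trans ha _; rewrite le_eqVlt; apply/orP; left; apply/eqP; ring.
rewrite lerNl; apply: le_trans e; rewrite -normrN; exact: ler_norm.
Qed.

Lemma lower_bound (G : Mnp -> Mnp) (X D : Mnp) (M : R) :
  X^T *m X = 1%:M -> differentiable G X ->
  (forall Y, Omega Y -> Y <> X -> frob_norm (G Y - G X) <= M * frob_norm (Y - X)) ->
  - (M * frob_norm D ^+ 2) <= frob_inner D ('d G X D).
Proof.
move=> hX dG hM.
set phi := fun Y => \tr (D^T *m G Y).
have Hphi : is_diff X phi (fun d => \tr (0 *m G X + D^T *m 'd G X d)).
  exact: (is_diff_trace (is_diff_mulmx (is_diff_cstf D^T X) (differentiableP dG))).
have E1 : frob_inner D ('d G X D) = 'D_D phi X.
  rewrite deriveE; last by case: Hphi.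
  by rewrite (congr1 (fun g => g D) (diff_val (is_diff_def := Hphi))) /= mul0mx add0r.
rewrite E1 /derive; apply: limr_ge.
  by apply: diff_derivable; case: Hphi.
have e0 : 0 < (1/12) / (frob_norm D + 1).
  by apply: divr_gt0; [lra | have := frob_norm_ge0 D; lra].
near=> h.
have hn0 : h != 0 by near: h; exact: nbhs_dnbhs_neq.
have hs : `|h| < (1/12) / (frob_norm D + 1) by near: h; exact: dnbhs0_lt.
rewrite /=.
have hh : `|h| * frob_norm D <= 1/12.
  have nD := frob_norm_ge0 D.
  have : `|h| * (frob_norm D + 1) < 1/12 by rewrite -ltr_pdivlMr //; lra.
  have := normr_ge0 h; nra.
have OY := omega_near hX hh.
have [eY|nY] := eqVneq (h *: D + X) X.
  have D0 : h *: D = 0 by move/(congr1 (fun M => M - X)): eY; rewrite addrK subrr.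
  have -> : D = 0.
    by move/eqP: D0; rewrite scaler_eq0 (negbTE hn0) /= => /eqP.
  by rewrite frob_norm0 scaler0 add0r subrr scaler0 expr0n /= mulr0 oppr0.
have hb := hM _ OY (elimN eqP nY).
apply: quot_lb => //.
have -> : phi (h *: D + X) - phi X = frob_inner D (G (h *: D + X) - G X).
  by rewrite /phi frob_innerBr.
apply: le_trans (frob_inner_le _ _) _.
apply: ler_wpM2l; first exact: frob_norm_ge0.
apply: le_trans hb _.
by rewrite addrK frob_normZ.
Unshelve. all: by end_near.
Qed.
End Lower.

Section LL.
Variable R : realType.
Variables n p : nat.
Notation Mnp := 'M[R]_(n, p).
Notation N := frob_norm.

Definition LL a b (G : Mnp -> 'M[R]_(a, b)) := forall X : Mnp,
  exists2 r : R, 0 < r & exists2 L : R, 0 <= L & forall Y Z : Mnp,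
    N (Y - X) < r -> N (Z - X) < r -> N (G Y - G Z) <= L * N (Y - Z).

Lemma LL_bound a b (G : Mnp -> 'M[R]_(a, b)) (X : Mnp) r L :
  (forall Y Z : Mnp, N (Y - X) < r -> N (Z - X) < r -> N (G Y - G Z) <= L * N (Y - Z)) ->
  0 <= L -> forall Y, N (Y - X) < r -> N (G Y) <= N (G X) + L * r.
Proof.
move=> H L0 Y hY.
have r0 : 0 < r by apply: le_lt_trans hY; exact: frob_norm_ge0.
have hX : N (X - X) < r by rewrite subrr frob_norm0.
have := H Y X hY hX.
have : N (G Y) <= N (G Y - G X) + N (G X).
  by apply: le_trans (frob_normD _ _); rewrite subrK.
have : L * N (Y - X) <= L * r by apply: ler_wpM2l => //; exact: ltW.
lra.
Qed.

Lemma LL_id : LL (fun Y : Mnp => Y).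
Proof. by move=> X; exists 1 => //; exists 1 => // Y Z _ _; rewrite mul1r. Qed.

Lemma LL_cst a b (C : 'M[R]_(a, b)) : LL (fun _ : Mnp => C).
Proof. by move=> X; exists 1 => //; exists 0 => // Y Z _ _; rewrite subrr frob_norm0 mul0r. Qed.

Lemma LL_add a b (A B : Mnp -> 'M[R]_(a, b)) : LL A -> LL B -> LL (fun Y => A Y + B Y).
Proof.
move=> HA HB X; have [rA rA0 [LA LA0 hA]] := HA X; have [rB rB0 [LB LB0 hB]] := HB X.
exists (Num.min rA rB); first by rewrite lt_min rA0 rB0.
exists (LA + LB); first exact: addr_ge0.
move=> Y Z; rewrite !lt_min => /andP [yA yB] /andP [zA zB].
have -> : A Y + B Y - (A Z + B Z) = (A Y - A Z) + (B Y - B Z) by rewrite opprD addrACA.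
apply: le_trans (frob_normD _ _) _; rewrite mulrDl.
by apply: lerD; [exact: hA | exact: hB].
Qed.

Lemma LL_scale a b (A : Mnp -> 'M[R]_(a, b)) c : LL A -> LL (fun Y => c *: A Y).
Proof.
move=> HA X; have [r r0 [L L0 h]] := HA X.
exists r => //; exists (`|c| * L); first by rewrite mulr_ge0.
move=> Y Z hY hZ; rewrite -scalerBr frob_normZ -mulrA.
by apply: ler_wpM2l => //; exact: h.
Qed.

Lemma LL_sub a b (A B : Mnp -> 'M[R]_(a, b)) : LL A -> LL B -> LL (fun Y => A Y - B Y).
Proof.
move=> HA HB; have HB' := LL_scale (-1) HB.
have := LL_add HA HB'.
by congr LL; apply/funext => Y; rewrite scaleN1r.
Qed.

Lemma LL_trmx a b (A : Mnp -> 'M[R]_(a, b)) : LL A -> LL (fun Y => (A Y)^T).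
Proof.
move=> HA X; have [r r0 [L L0 h]] := HA X.
by exists r => //; exists L => // Y Z hY hZ; rewrite -linearB /= frob_normT; exact: h.
Qed.

Lemma LL_mul a b c (A : Mnp -> 'M[R]_(a, b)) (B : Mnp -> 'M[R]_(b, c)) :
  LL A -> LL B -> LL (fun Y => A Y *m B Y).
Proof.
move=> HA HB X; have [rA rA0 [LA LA0 hA]] := HA X; have [rB rB0 [LB LB0 hB]] := HB X.
have bA := LL_bound hA LA0; have bB := LL_bound hB LB0.
set cA := N (A X) + LA * rA; set cB := N (B X) + LB * rB.
have cA0 : 0 <= cA by rewrite addr_ge0 ?frob_norm_ge0 // mulr_ge0 // ltW.
have cB0 : 0 <= cB by rewrite addr_ge0 ?frob_norm_ge0 // mulr_ge0 // ltW.
exists (Num.min rA rB); first by rewrite lt_min rA0 rB0.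
exists (cA * LB + LA * cB); first by rewrite addr_ge0 // mulr_ge0.
move=> Y Z; rewrite !lt_min => /andP [yA yB] /andP [zA zB].
have -> : A Y *m B Y - A Z *m B Z = A Y *m (B Y - B Z) + (A Y - A Z) *m B Z.
  by rewrite mulmxBr mulmxBl addrA subrK.
apply: le_trans (frob_normD _ _) _; rewrite mulrDl.
apply: lerD.
  apply: le_trans (frob_normM _ _) _; rewrite -mulrA.
  apply: ler_pM; [exact: frob_norm_ge0 | exact: frob_norm_ge0 | exact: bA | exact: hB].
apply: le_trans (frob_normM _ _) _.
rewrite mulrAC; apply: ler_pM; [exact: frob_norm_ge0 | exact: frob_norm_ge0 | exact: hA | exact: bB].
Qed.

Lemma LL_comp (F : Mnp -> Mnp) (P : Mnp -> Mnp) :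
  (forall X : Mnp, exists2 r : R, 0 < r & exists2 L : R, 0 <= L & forall Y Z : Mnp,
    N (Y - X) < r -> N (Z - X) < r -> N (F Y - F Z) <= L * N (Y - Z)) ->
  LL P -> LL (fun Y => F (P Y)).
Proof.
move=> HF HP X; have [rP rP0 [LP LP0 hP]] := HP X.
have [rF rF0 [LF LF0 hF]] := HF (P X).
have c0 : 0 < rF / (LP + 1) by apply: divr_gt0 => //; lra.
exists (Num.min rP (rF / (LP + 1))); first by rewrite lt_min rP0 c0.
exists (LF * LP); first exact: mulr_ge0.
have near : forall Y, N (Y - X) < Num.min rP (rF / (LP + 1)) -> N (P Y - P X) < rF.
  move=> Y; rewrite lt_min => /andP [y1 y2].
  have hX : N (X - X) < rP by rewrite subrr frob_norm0.
  apply: le_lt_trans (hP Y X y1 hX) _.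
  have lp : 0 < LP + 1 by lra.
  rewrite ltr_pdivlMr // in y2.
  have := frob_norm_ge0 (Y - X); nra.
move=> Y Z hY hZ.
apply: le_trans (hF _ _ (near Y hY) (near Z hZ)) _.
rewrite -mulrA; apply: ler_wpM2l => //.
move: hY hZ; rewrite !lt_min => /andP [y1 _] /andP [z1 _]; exact: hP.
Qed.

Lemma loc_lip_nonneg (F : Mnp -> Mnp) : loc_lip_mx F ->
  forall X : Mnp, exists2 r : R, 0 < r & exists2 L : R, 0 <= L & forall Y Z : Mnp,
    N (Y - X) < r -> N (Z - X) < r -> N (F Y - F Z) <= L * N (Y - Z).
Proof.
move=> H X; have [r r0 [L hL]] := H X.
exists r => //; exists `|L| => // Y Z hY hZ.
apply: le_trans (hL Y Z hY hZ) _; apply: ler_wpM2r; [exact: frob_norm_ge0 | exact: ler_norm].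
Qed.

Lemma LL_Gf (f : Mnp -> R) : loc_lip_mx (grad f) -> LL (Gf f).
Proof.
move=> H; have HF := loc_lip_nonneg H.
have HI := @LL_id.
have HA : LL (@Acal R n p).
  exact: (LL_sub (LL_cst _) (LL_scale _ (LL_mul (LL_trmx HI) HI))).
have HW : LL (fun Y => grad f (Y *m Acal Y)) by exact: (LL_comp HF (LL_mul HI HA)).
exact: (LL_sub (LL_scale _ HW) (LL_scale _ (LL_add (LL_add
  (LL_mul HW (LL_mul (LL_trmx HI) HI)) (LL_mul HI (LL_mul (LL_trmx HW) HI)))
  (LL_mul HI (LL_mul (LL_trmx HI) HW))))).
Qed.
End LL.

Local Open Scope classical_set_scope.

Section Topo.
Variable R : realType.
Variables n p : nat.
Notation Mnp := 'M[R]_(n, p).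
Notation N := frob_norm.

Lemma entry_le (A : Mnp) i j : `|A i j| <= `|A|.
Proof.
rewrite [leRHS]/Num.Def.normr /= mx_normrE.
exact: (le_bigmax _ (fun ij : 'I_n * 'I_p => `|A ij.1 ij.2|) (i, j)).
Qed.

Lemma frob_le_mx (A : Mnp) : N A <= ((n * p)%:R + 1) * `|A|.
Proof.
apply: le_of_sq; first by rewrite mulr_ge0 // addr_ge0.
rewrite frob_norm_sq frob_innerE.
apply: (@le_trans _ _ (\sum_(i < n) \sum_(j < p) `|A| ^+ 2)).
  apply: ler_sum => i _; apply: ler_sum => j _.
  rewrite -expr2 -real_normK ?num_real //; apply: lerXn2r; rewrite ?nnegrE //.
  exact: entry_le.
rewrite !sumr_const !card_ord -mulrnA [in leRHS]exprMn.
rewrite -[_ *+ (p * n)]mulr_natl.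
apply: ler_wpM2r; first exact: sqr_ge0.
rewrite mulnC natrM; set k := (n%:R * p%:R : R).
have : 0 <= k by rewrite /k mulr_ge0.
nra.
Qed.

Lemma near_frob (X : Mnp) (r : R) : 0 < r -> \forall Y \near X, N (Y - X) < r.
Proof.
move=> r0; set c := ((n * p)%:R + 1 : R).
have c0 : 0 < c by rewrite /c ltr_wpDl.
apply: filterS (nbhsx_ballx X (r / c) (divr_gt0 r0 c0)) => Y.
rewrite -ball_normE /= => hY.
apply: le_lt_trans (frob_le_mx _) _.
by rewrite -ltr_pdivlMl // mulrC -normrN opprB.
Qed.

Lemma uniform_lip a b (G : Mnp -> 'M[R]_(a, b)) (K : set Mnp) : compact K -> LL G ->
  exists L, forall Y Z, K Y -> K Z -> N (G Y - G Z) <= L * N (Y - Z).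
Proof.
move=> cK HG; have NC := (compact_near_coveringP K).1 cK.
have [B hB] : exists B, forall Y, K Y -> N (G Y) <= B.
  have H : \forall B \near +oo, K `<=` (fun Y => N (G Y) <= B).
    apply: NC => X KX.
    have [r r0 [L L0 h]] := HG X.
    near=> Y B.
    have hB : N (G X) + L * r <= B by near: B; apply: nbhs_pinfty_ge; exact: num_real.
    have hY : N (Y - X) < r by near: Y; exact: near_frob.
    exact: le_trans (LL_bound h L0 hY) hB.
  by have [B hB] := filter_ex H; exists B.
have H : \forall L \near +oo, K `<=` (fun Y => forall Z, K Z -> N (G Y - G Z) <= L * N (Y - Z)).
  apply: NC => X KX.
  have [r r0 [LX LX0 h]] := HG X.
  have bX := LL_bound h LX0.
  have r2 : 0 < r / 2 by lra.
  near=> Y L => Z KZ.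
  have hL1 : LX <= L by near: L; apply: nbhs_pinfty_ge; exact: num_real.
  have hL2 : (2 * B + LX * r) / (r / 2) <= L by near: L; apply: nbhs_pinfty_ge; exact: num_real.
  have hY : N (Y - X) < r / 2 by near: Y; exact: near_frob.
  have nYZ := frob_norm_ge0 (Y - Z).
  have [hZ|hZ] := ltP (N (Z - X)) r.
    have hY' : N (Y - X) < r by lra.
    apply: le_trans (h Y Z hY' hZ) _; exact: ler_wpM2r.
  have far : r / 2 <= N (Y - Z).
    have : N (Z - X) <= N (Z - Y) + N (Y - X).
      by apply: le_trans (frob_normD _ _); rewrite addrA subrK.
    rewrite (frob_normB Z Y); lra.
  have gY : N (G Y) <= B + LX * r.
    apply: le_trans (bX Y _) _; first lra.
    by rewrite lerD2r; exact: hB.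
  have gZ := hB Z KZ.
  have : N (G Y - G Z) <= N (G Y) + N (G Z).
    by apply: le_trans (frob_normD _ _) _; rewrite frob_normN.
  have L0 : 0 <= L by lra.
  rewrite ler_pdivrMr // in hL2.
  have : L * (r / 2) <= L * N (Y - Z) by exact: ler_wpM2l.
  move=> h1 h2 /=; lra.
have [L hL] := filter_ex H.
by exists L => Y Z KY KZ; exact: hL.
Unshelve. all: by end_near.
Qed.
End Topo.

Local Open Scope classical_set_scope.

Section Cpt.
Variable R : realType.

Lemma entry_le_gen m k (A : 'M[R]_(m, k)) i j : `|A i j| <= `|A|.
Proof.
rewrite [leRHS]/Num.Def.normr /= mx_normrE.
exact: (le_bigmax _ (fun ij : 'I_m * 'I_k => `|A ij.1 ij.2|) (i, j)).
Qed.

Lemma entry_le_frob m k (A : 'M[R]_(m, k)) i j : `|A i j| <= frob_norm A.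
Proof.
have := frob_inner_le A (delta_mx i j).
rewrite frob_inner_delta.
have -> : frob_norm (delta_mx i j : 'M[R]_(m, k)) = 1.
  by rewrite /frob_norm frob_inner_delta mxE !eqxx sqrtr1.
by rewrite mulr1.
Qed.

Variables n p : nat.
Notation Mnp := 'M[R]_(n, p).

Lemma vec_mx_norm (u : 'rV[R]_(n * p)) : `|vec_mx u : Mnp| <= `|u|.
Proof.
rewrite [leLHS]/Num.Def.normr /= mx_normrE.
apply: bigmax_le => // -[i j] _ /=; rewrite mxE; exact: entry_le_gen.
Qed.

Lemma vec_mx_cont : continuous (fun u : 'rV[R]_(n * p) => (vec_mx u : Mnp)).
Proof.
move=> v; apply/(@cvgrPdist_lt _ _ _ (nbhs v)) => e e0.
apply: filterS (nbhsx_ballx v e e0) => w; rewrite -ball_normE /= => hw.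
by apply: le_lt_trans hw; rewrite -linearB; exact: vec_mx_norm.
Qed.

Definition Kbox : set Mnp :=
  (fun u : 'rV[R]_(n * p) => (vec_mx u : Mnp)) @`
     [set v : 'rV[R]_(n * p) | forall i, `[(-2 : R), 2]%classic (v ord0 i)].

Lemma Kbox_compact : compact Kbox.
Proof.
apply: continuous_compact.
  by apply: continuous_subspaceT; exact: vec_mx_cont.
apply: (@rV_compact _ _ (fun=> `[(-2 : R), 2]%classic)).
by move=> _; exact: segment_compact.
Qed.

Lemma spec_norm_ge (Y : Mnp) (v : 'cV[R]_p) : frob_norm v = 1 ->
  frob_norm (Y *m v) <= spec_norm Y.
Proof.
move=> nv; rewrite /spec_norm; apply: sup_upper_bound; last by exists v.
split; first by exists (frob_norm (Y *m v)); exists v.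
exists (frob_norm Y) => _ [w /= nw <-].
by apply: le_trans (frob_normM _ _) _; rewrite nw mulr1.
Qed.

Lemma Omega_Kbox : @Omega R n p `<=` Kbox.
Proof.
move=> Y OY; exists (mxvec Y); last exact: mxvecK.
move=> k; case/mxvec_indexP: k => i j; rewrite mxvecE.
have nv : frob_norm (delta_mx j ord0 : 'cV[R]_p) = 1.
  by rewrite /frob_norm frob_inner_delta mxE !eqxx sqrtr1.
have h1 := spec_norm_ge Y nv.
have h2 : `|Y i j| <= frob_norm (Y *m (delta_mx j ord0 : 'cV[R]_p)).
  by rewrite -colE; apply: le_trans (entry_le_frob _ i ord0); rewrite mxE.
move: OY; rewrite /Omega /= => OY.
rewrite in_itv /=; apply/andP; split.
  have := ler_norm (- Y i j); rewrite normrN; lra.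
have := ler_norm (Y i j); lra.
Qed.
End Cpt.

Local Open Scope classical_set_scope.

Section Final.
Variable R : realType.
Variables n p : nat.
Notation Mnp := 'M[R]_(n, p).
Notation N := frob_norm.

Lemma frob_norm_gt0 (A : Mnp) : A != 0 -> 0 < N A.
Proof.
move=> hA; rewrite lt_def frob_norm_ge0 andbT; apply/eqP => h0.
have : frob_inner A A = 0 by rewrite -frob_norm_sq h0 expr0n.
by move/frob_inner_eq0 => e; rewrite e eqxx in hA.
Qed.

Lemma M2_bound (f : Mnp -> R) : (forall Y, differentiable f Y) -> loc_lip_mx (grad f) ->
  forall Y Z : Mnp, Omega Y -> Omega Z -> Y <> Z ->
    N (Gf f Y - Gf f Z) <= M2 f * N (Y - Z).
Proof.
move=> df hl Y Z OY OZ nYZ.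
have gG : grad (gfun f) = Gf f by apply/funext => W; apply: grad_gfun.
have [L hL] := uniform_lip (@Kbox_compact R n p) (LL_Gf hl).
have pos : 0 < N (Y - Z) by apply: frob_norm_gt0; rewrite subr_eq0; apply/eqP.
rewrite -ler_pdivrMr // /M2 gG.
apply: sup_upper_bound; last by exists Y, Z.
split; first by exists (N (Gf f Y - Gf f Z) / N (Y - Z)); exists Y, Z.
exists L => _ [Y' [Z' [OY' OZ' nYZ' ->]]].
have pos' : 0 < N (Y' - Z') by apply: frob_norm_gt0; rewrite subr_eq0; apply/eqP.
rewrite ler_pdivrMr //; apply: hL; exact: Omega_Kbox.
Qed.

Lemma Omega_stiefel (X : Mnp) : X^T *m X = 1%:M -> Omega X.
Proof.
move=> h; have := omega_near (h := 0) (D := X) h.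
by rewrite normr0 mul0r scale0r add0r => H; apply: H; lra.
Qed.
End Final.

Unset Implicit Arguments.
Theorem mainTheorem11 (R : realType) (n p : nat) (f : 'M[R]_(n, p) -> R) (beta : R) :
  0 < beta ->
  (forall X : 'M[R]_(n, p), differentiable f X) ->
  loc_lip_scal f -> loc_lip_mx (grad f) ->
  (forall X : 'M[R]_(n, p), differentiable (grad f) X) ->
  forall X : 'M[R]_(n, p), stiefel X -> grad (hfun f beta) X = 0 ->
  forall D1 D2 : 'M[R]_(n, p), tangent_sp X D1 -> normal_sp X D2 ->
    (2 * beta - M2 f) * frob_norm D2 ^+ 2 <= frob_inner D2 (hess (hfun f beta) X D2)
    /\ frob_inner D1 (hess (hfun f beta) X D2) = 0.
Proof.
move=> hb df _ hl dF X hX hg D1 D2 hD1 [L [hL ->]].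
have [S [hS hW]] := grad_cond hX (df X) hg.
rewrite hess_eq //; split; last first.
  by rewrite dGf_val //; apply: (orth_main _ hX hD1 hL hS hW).
rewrite frob_innerDr pen_main //.
have lb := lower_bound (X *m L) hX (Gf_diff (dF _))
  (fun Y OY nY => M2_bound df hl OY (Omega_stiefel hX) nY).
set a := frob_inner _ _ in lb *; set m := M2 f in lb *; set q := frob_norm (X *m L) in lb *.
nra.
Qed.
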